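(* Let $p$ be a prime and $G$ a group of order $mp$ with $p\nmid m$, having a unique Sylow $p$-subgroup $P$. Suppose $G$ has a subgroup $M$ of order $m$ such that $p\nmid|\mathrm{Aut}(M)|$. Let $N$ be a regular subgroup of $\mathrm{Hol}(G)$ and, for $g\in G$, let $\nu(g)$ be the unique element of $N$ with $1^{\nu(g)}=g$; write $\nu(P)=\{\nu(x):x\in P\}$. Then: (1) $\nu(P)$ is a subgroup of $N$, hence a Sylow $p$-subgroup of $N$; (2) $\nu(P)\in\{\rho(P),\lambda(P)\}$; (3) $[\rho(G),\nu(P)]\le\nu(P)$.
   Context: Permutations act on the right, written exponentially. $S(G)$ is the permutation group of the set $G$; $\rho(g):x\mapsto xg$ and $\lambda(g):x\mapsto gx$; $\mathrm{Hol}(G)=N_{S(G)}(\rho(G))=\mathrm{Aut}(G)\rho(G)$, which also contains $\lambda(G)$. A subgroup of $S(G)$ is regular if it acts transitively with trivial point stabilisers. Commutators in $S(G)$: $[x,y]=x^{-1}y^{-1}xy$. *)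

(* Defs.v *)
From mathcomp Require Import all_boot all_fingroup all_solvable.
Set Implicit Arguments. Unset Strict Implicit. Unset Printing Implicit Defensive.
Local Open Scope group_scope.

(* The group G is the whole finGroupType gT (G = [set: gT]); S(G) = {perm gT},
   with MathComp's right action: (s * t) x = t (s x). *)
Section Holomorph.
Variable gT : finGroupType.

Definition rho (g : gT) : {perm gT} := perm (mulIg g).
Definition lambda (g : gT) : {perm gT} := perm (mulgI g).

Definition rhoG : {set {perm gT}} := [set rho g | g in [set: gT]].

Definition Hol : {set {perm gT}} := 'N(rhoG).

Definition regular (N : {set {perm gT}}) : Prop :=
  [transitive N, on [set: gT] | 'P] /\ forall x : gT, 'C_N[x | 'P] = 1.

Definition nu (N : {set {perm gT}}) (g : gT) : {perm gT} :=
  odflt 1 [pick n in N | n 1 == g].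

Definition nu_set (N : {set {perm gT}}) (A : {set gT}) : {set {perm gT}} :=
  [set nu N x | x in A].
End Holomorph.

(* Main.v *)
Require Import Defs.
From mathcomp Require Import all_boot all_fingroup all_solvable.
Local Open Scope group_scope.

Section Generic.
Variable gT : finGroupType.
Implicit Types x y : gT.

Section Morph.
Variable f : gT -> gT.
Hypothesis fM : forall x y, f (x * y) = f x * f y.
Lemma gf1 : f 1 = 1.
Proof. apply: (mulgI (f 1)); by rewrite -fM !mulg1. Qed.
Lemma gfV x : f x^-1 = (f x)^-1.
Proof. apply: (mulgI (f x)); by rewrite -fM !mulgV gf1. Qed.
Lemma gfX x k : f (x ^+ k) = (f x) ^+ k.
Proof. elim: k => [|k IH]; first by rewrite !expg0 gf1. by rewrite !expgS fM IH. Qed.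
Lemma gfJ x y : f (x ^ y) = f x ^ f y.
Proof. by rewrite !conjgE !fM gfV. Qed.
End Morph.

Lemma aut_fix (A : {group gT}) (h : gT -> gT) k :
  {in A &, {morph h : x y / x * y}} -> {in A, forall x, h x \in A} ->
  {in A &, injective h} ->
  {in A, forall x, iter k h x = x} -> coprime k #|Aut A| -> {in A, forall x, h x = x}.
Proof.
move=> hM hA hI hk cop.
pose h' x := if x \in A then h x else x.
have h'I : injective h'.
  move=> x y; rewrite /h'; case: ifP => Ax; case: ifP => Ay //.
  - exact: hI.
  - by move=> hxy; move: (hA x Ax); rewrite hxy Ay.
  - by move=> hxy; move: (hA y Ay); rewrite -hxy Ax.
pose a := perm h'I.
have aA : a \in Aut A.
  rewrite inE; apply/andP; split.
    apply/subsetP => x; rewrite inE permE /h'; case: ifP => //; by rewrite eqxx.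
  by apply/morphicP => x y Ax Ay; rewrite !permE /h' Ax Ay groupM // hM.
have ak : a ^+ k = 1.
  apply/permP => x; rewrite permX perm1.
  case Ax: (x \in A).
    have it : forall j, iter j a x = iter j h x /\ iter j h x \in A.
      elim=> [|j [IH1 IH2]] /=; first by [].
      by rewrite IH1 permE /h' IH2; split=> //; apply: hA.
    by case: (it k) => -> _; apply: hk; rewrite Ax.
  elim: k {hk cop} => [|j IH] //=.
  by rewrite IH permE /h' Ax.
have : #[a] %| 1.
  by rewrite -(eqnP cop) dvdn_gcd order_dvdG // order_dvdn ak eqxx.
rewrite dvdn1 order_eq1 => /eqP a1 x Ax.
have := permE h'I x; rewrite -/a a1 perm1 /h' Ax => <-. by [].
Qed.
End Generic.

Section HolFacts.
Variable gT : finGroupType.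
Implicit Types x y : gT.

Lemma hol_mul (h : {perm gT}) : h \in Hol gT -> forall x y, h (x * y) = h x * (h 1)^-1 * h y.
Proof.
rewrite /Hol => hN x y.
have : rho y ^ h \in rhoG gT by rewrite memJ_norm // imset_f ?inE.
case/imsetP => g _ E.
have E2 : forall z, h (z * y) = h z * g.
  move=> z; have := congr1 (fun s : {perm gT} => s (h z)) E.
  by rewrite /= !conjgE !permM permK /rho !permE.
have := E2 1; rewrite mul1g => ->.
by rewrite E2 -mulgA mulKg.
Qed.

Definition beta (h : {perm gT}) x := h x * (h 1)^-1.

Lemma beta_morph (h : {perm gT}) : h \in Hol gT -> forall x y, beta h (x * y) = beta h x * beta h y.
Proof. by move=> hH x y; rewrite /beta hol_mul // !mulgA. Qed.

Lemma beta_inj (h : {perm gT}) : injective (beta h).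
Proof. by move=> x y /mulIg /perm_inj. Qed.

Lemma hol_beta (h : {perm gT}) x : h x = beta h x * h 1.
Proof. by rewrite /beta mulgKV. Qed.

Lemma beta_comp (s h : {perm gT}) x : h \in Hol gT -> beta (s * h) x = beta h (beta s x).
Proof.
move=> hH; rewrite beta_morph // (@gfV _ _ (@beta_morph h hH)) /beta !permM.
by rewrite invMg invgK !mulgA mulgKV.
Qed.

Lemma beta_pow (h : {perm gT}) k x : h \in Hol gT -> beta (h ^+ k) x = iter k (beta h) x.
Proof.
move=> hH; elim: k => [|k IH]; first by rewrite expg0 /beta !perm1 invg1 mulg1.
by rewrite expgSr beta_comp // IH.
Qed.
End HolFacts.
Arguments beta {gT} h x.
Arguments hol_mul {gT h}.
Arguments beta_morph {gT h}.
Arguments beta_inj {gT} h.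
Arguments hol_beta {gT} h x.
Arguments beta_comp {gT s h} x.
Arguments beta_pow {gT} h k x.
Arguments gf1 {gT f}.
Arguments gfV {gT f}.
Arguments gfX {gT f}.
Arguments gfJ {gT f}.
Arguments aut_fix {gT A h k}.

Section Main.
Variables (gT : finGroupType) (p m : nat) (P M : {group gT}) (N : {group {perm gT}}).
Hypotheses (pr : prime p) (cardG : #|[set: gT]| = (m * p)%N) (pm : ~~ (p %| m))
  (SylP : 'Syl_p([set: gT]) = [set P]) (cardM : #|M| = m)
  (autM : ~~ (p %| #|Aut M|)) (NH : N \subset Hol gT) (reg : regular N).

Lemma sylP : p.-Sylow([set: gT]) P.
Proof. have : P \in 'Syl_p([set: gT]) by rewrite SylP set11. by rewrite inE. Qed.

Lemma nPG : P <| [set: gT].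
Proof.
have : #|'Syl_p([set: gT])| == 1%N by rewrite SylP cards1.
case/normal_sylowP => Q sQ nQ.
have : Q \in 'Syl_p([set: gT]) by rewrite inE.
by rewrite SylP => /set1P <-.
Qed.

Lemma m_gt0 : 0 < m.
Proof. by have := cardG_gt0 [set: gT]; rewrite cardG muln_gt0 => /andP[]. Qed.

Lemma cardP : #|P| = p.
Proof.
rewrite (card_Hall sylP) cardG partnM ?m_gt0 ?prime_gt0 //.
by rewrite part_p'nat ?p'natE // part_pnat_id ?pnat_id // mul1n.
Qed.

Lemma memP x : (x \in P) = p.-elt x.
Proof. by rewrite (mem_normal_Hall sylP nPG) ?inE. Qed.

Lemma memJP u g : u \in P -> u ^ g \in P.
Proof. by move=> uP; rewrite memJ_norm // (subsetP (normal_norm nPG)) ?inE. Qed.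

Lemma expP u : u \in P -> u ^+ p = 1.
Proof. by move=> uP; rewrite -cardP expg_cardG. Qed.

Lemma cycP u : u \in P -> u != 1 -> <[u]> = P.
Proof.
move=> uP u1; apply/eqP; rewrite eqEcard cycle_subG uP /= cardP -orderE.
have : #[u] %| p by rewrite -cardP order_dvdG.
case/primeP: pr => _ H /H /orP[/eqP o1|/eqP ->]; last by rewrite leqnn.
by move: u1; rewrite -order_eq1 o1.
Qed.

Lemma abP : abelian P.
Proof. by apply: cyclic_abelian; apply: prime_cyclic; rewrite cardP. Qed.

Lemma copPM : coprime #|P| #|M|.
Proof. by rewrite cardP cardM prime_coprime. Qed.

Lemma tiPM : P :&: M = 1.
Proof. exact: coprime_TIg copPM. Qed.

Lemma PMG : P * M = [set: gT].
Proof.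
apply/eqP; rewrite eqEcard subsetT /= cardsT.
by rewrite -cardsT cardG TI_cardMg ?tiPM // cardP cardM mulnC.
Qed.

Lemma complM : M \in [complements to P in [set: gT]%G].
Proof. by apply/complP; rewrite tiPM PMG. Qed.

Definition pi x := remgr P M x.

Lemma piM x y : pi (x * y) = pi x * pi y.
Proof. by rewrite /pi (remgrM complM) ?inE // nPG. Qed.

Lemma piM_in x : pi x \in M.
Proof. by apply: mem_remgr; rewrite PMG inE. Qed.

Lemma pi_id y : y \in M -> pi y = y.
Proof. by move=> yM; rewrite /pi (remgr_id tiPM). Qed.

Lemma pi1 u : u \in P -> pi u = 1.
Proof. by move=> uP; rewrite /pi remgr1. Qed.

Lemma pi_ker x : pi x = 1 -> x \in P.
Proof.
move=> h; rewrite (divgr_eq P M x) -/(pi x) h mulg1 mem_divgr // PMG inE //.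
Qed.


Lemma piV x : pi x^-1 = (pi x)^-1.
Proof. by rewrite (gfV piM). Qed.

Lemma reg_trans x : exists2 n, n \in N & n 1 = x.
Proof.
case: reg => tr _; have [n nN E] := atransP2 tr (in_setT 1) (in_setT x).
by exists n => //; rewrite E /= apermE.
Qed.

Lemma reg_fix n x : n \in N -> n x = x -> n = 1.
Proof.
move=> nN E; case: reg => _ st.
have : n \in 'C_N[x | 'P] by rewrite inE nN; apply/astab1P; rewrite /= apermE.
by rewrite st => /set1P.
Qed.

Lemma reg_inj n n' x : n \in N -> n' \in N -> n x = n' x -> n = n'.
Proof.
move=> nN nN' E; have : n * n'^-1 = 1.
  by apply: (reg_fix _ x); rewrite ?groupM ?groupV // permM E permK.
by move/eqP; rewrite -eq_mulgV1 => /eqP.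
Qed.

Lemma nu_spec g : nu N g \in N /\ nu N g 1 = g.
Proof.
rewrite /nu; case: pickP => [n /andP[nN /eqP]|] //.
move=> H; case: (reg_trans g) => n nN E; have := H n; by rewrite nN E eqxx.
Qed.

Lemma nu_eq n g : n \in N -> n 1 = g -> nu N g = n.
Proof.
move=> nN E; case: (nu_spec g) => nuN nu1.
by apply: (reg_inj _ _ 1); rewrite // nu1 E.
Qed.

Lemma cardN : #|N| = #|[set: gT]|.
Proof.
case: reg => tr st; have := card_orbit_stab 'P N 1.
by rewrite (atransP tr) ?inE // st cards1 muln1.
Qed.

Lemma keyA (q : {perm gT}) : q \in Hol gT -> q ^+ p = 1 ->
  [/\ q 1 \in P, forall x, pi (beta q x) = pi x & {in P, forall u, beta q u = u}].
Proof.
move=> qH qp.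
set f := beta q.
have fM : forall x y, f (x * y) = f x * f y := beta_morph qH.
have finj : injective f := beta_inj q.
have fpow : forall x, iter p f x = x.
  by move=> x; rewrite /f -beta_pow // qp /beta !perm1 invg1 mulg1.
have fP : forall u, u \in P -> f u \in P.
  move=> u uP; rewrite memP; apply: (pnat_dvd _ (pnat_id pr)).
  by rewrite order_dvdn -(gfX fM) expP // (gf1 fM).
have fPinv : forall z, f z \in P -> z \in P.
  move=> z fz; rewrite memP; apply: (pnat_dvd _ (pnat_id pr)).
  rewrite order_dvdn; apply/eqP; apply: finj.
  by rewrite (gfX fM) expP // (gf1 fM).
have pif : forall z, pi (f (pi z)) = pi (f z).
  move=> z; have dP : f (divgr P M z) \in P.
    by apply: fP; rewrite mem_divgr // PMG inE.
  by rewrite [in RHS](divgr_eq P M z) fM piM -/(pi z) (pi1 _ dP) mul1g.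
pose psi y := pi (f y).
have psi_fix : {in M, forall y, psi y = y}.
  apply: (aut_fix (k := p)).
  - by move=> x y _ _; rewrite /psi fM piM.
  - by move=> y _; apply: piM_in.
  - move=> x y xM yM E.
    have : x * y^-1 \in P :&: M.
      have xyM : x * y^-1 \in M by rewrite groupM ?groupV.
      rewrite in_setI xyM andbT; apply: fPinv; apply: pi_ker.
      by rewrite fM (gfV fM) piM piV -/(psi x) -/(psi y) E mulgV.
    by rewrite tiPM => /set1P/eqP; rewrite -eq_mulgV1 => /eqP.
  - move=> y yM.
    have it : forall j, iter j psi y = pi (iter j f y).
      by elim=> [|j IH] /=; [rewrite pi_id | rewrite IH /psi pif].
    by rewrite it fpow pi_id.
  - by rewrite prime_coprime.
have piq : forall x, pi (f x) = pi x by move=> x; rewrite -pif; apply: psi_fix; apply: piM_in.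
set c := pi (q 1).
have piqx : forall x, pi (q x) = pi x * c by move=> x; rewrite hol_beta piM piq.
have iterc : forall j, pi (iter j q 1) = c ^+ j.
  elim=> [|j IH] /=; first by rewrite expg0 pi1.
  by rewrite piqx IH expgSr.
have c1 : c = 1.
  have cp : c ^+ p = 1 by rewrite -iterc -permX qp perm1 pi1.
  have : #[c] %| p by rewrite order_dvdn cp.
  case/primeP: pr => _ H /H /orP[/eqP|/eqP oc]; first by move/eqP; rewrite order_eq1 => /eqP.
  have : #[c] %| m by rewrite -cardM order_dvdG // piM_in.
  by rewrite oc (negPf pm).
split => //; first by apply: pi_ker.
apply: (aut_fix (k := p)).
- by move=> x y _ _; rewrite fM.
- exact: fP.
- by move=> x y _ _; apply: finj.
- by move=> x _; apply: fpow.
- rewrite card_Aut_cyclic ?prime_cyclic ?cardP // totient_prime // (prime_coprime _ pr).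
  have p1 := prime_gt1 pr.
  have h0 : 0 < p.-1 by move: p1; case: (p) => [|[|k]].
  by rewrite gtnNdvd // ltn_predL prime_gt0.
Qed.


Lemma commP x y : x \in P -> y \in P -> commute x y.
Proof. by move=> xP yP; apply: (centsP abP). Qed.

Lemma conj_comm (x y : gT) : commute x y -> x ^ y = x.
Proof. by move=> c; rewrite conjgE c mulKg. Qed.

Lemma keyB (q : {perm gT}) : q \in Hol gT -> q ^+ p = 1 ->
  exists2 b, b \in P & forall x, beta q x = x ^ b.
Proof.
move=> qH qp; have [q1P piq fPid] := keyA q qH qp.
pose f := beta q.
have fM : forall x y, f (x * y) = f x * f y := beta_morph qH.
have finj : injective f := beta_inj q.
have gsK1 : group_set [set f y | y in M].
  apply/group_setP; split; first by rewrite -(gf1 fM) imset_f.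
  by move=> _ _ /imsetP[x xM ->] /imsetP[y yM ->]; rewrite -fM imset_f // groupM.
pose K1 := Group gsK1.
have [b bP E] : exists2 b, b \in P & K1 :=: M :^ b.
  apply: SchurZassenhaus_trans_sol.
  - exact: abelian_sol abP.
  - exact: subset_trans (subsetT M) (normal_norm nPG).
  - by rewrite PMG subsetT.
  - exact: copPM.
  - by rewrite /= card_in_imset // => x y _ _; apply: finj.
exists b => // x.
have fyM : forall y, y \in M -> f y = y ^ b.
  move=> y yM.
  have : f y \in M :^ b by rewrite -E /= imset_f.
  rewrite mem_conjg; move: (f y ^ b^-1) (conjgKV b (f y)) => y' Ey y'M.
  have : pi (y' ^ b) = y'.
    by rewrite conjgE !piM piV (pi1 _ bP) invg1 mul1g mulg1 pi_id.
  by rewrite Ey piq pi_id // => yy'; rewrite -Ey -yy'.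
have dP : divgr P M x \in P by rewrite mem_divgr // PMG inE.
change (f x = x ^ b); rewrite [in LHS](divgr_eq P M x) fM {1}/f (fPid _ dP) -/f fyM ?piM_in //.
by rewrite -{1}(conj_comm _ _ (commP _ _ dP bP)) -conjMg -divgr_eq.
Qed.


Lemma holP (n : {perm gT}) u : n \in Hol gT -> u \in P -> beta n u \in P.
Proof.
move=> nH uP; rewrite memP; apply: (pnat_dvd _ (pnat_id pr)).
by rewrite order_dvdn -(gfX (beta_morph nH)) expP // (gf1 (beta_morph nH)).
Qed.

Lemma nuQ (Q : {group {perm gT}}) : p.-Sylow(N) Q -> nu_set N P = Q.
Proof.
move=> sQ; have QN := pHall_sub sQ.
have cQ : #|Q| = p by rewrite (card_Hall sQ) cardN -(card_Hall sylP) cardP.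
have qp : forall q, q \in Q -> q ^+ p = 1 by move=> q qQ; rewrite -cQ expg_cardG.
have qN : forall q, q \in Q -> q \in N by move=> q qQ; apply: (subsetP QN).
have qH : forall q, q \in Q -> q \in Hol gT by move=> q qQ; apply: (subsetP NH); apply: qN.
have q1P : forall q, q \in Q -> q 1 \in P.
  by move=> q qQ; case: (keyA q (qH q qQ) (qp q qQ)).
have im : [set q 1 | q : {perm gT} in Q] = P.
  apply/eqP; rewrite eqEcard; apply/andP; split.
    by apply/subsetP => _ /imsetP[q qQ ->]; apply: q1P.
  rewrite card_in_imset ?cQ ?cardP // => q q' qQ q'Q E.
  by apply: (reg_inj _ _ 1); rewrite ?qN.
apply/eqP; rewrite eqEcard; apply/andP; split.
  apply/subsetP => _ /imsetP[x xP ->]; move: xP; rewrite -im => /imsetP[q qQ ->].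
  by rewrite (nu_eq q (q 1)) ?qN.
rewrite card_in_imset ?cQ ?cardP // => x y _ _ E.
by case: (nu_spec x) => _ <-; case: (nu_spec y) => _ <-; rewrite E.
Qed.


Lemma conj_fix_comm (x y : gT) : x ^ y = x -> commute x y.
Proof. by move=> h; rewrite /commute conjgC h. Qed.

Lemma core (q0 : {perm gT}) (a0 b : gT) :
  q0 \in N -> a0 \in P -> b \in P ->
  (forall n, n \in N -> q0 ^ n \in <[q0]>) ->
  (forall x, q0 x = x ^ b * a0) ->
  (forall x, q0 x = x * a0) \/ (forall x, q0 x = a0 * x).
Proof.
move=> q0N a0P bP nQ qE.
have [b1|b1] := eqVneq b 1; first by left => x; rewrite qE b1 conjg1.
have [ba1|ba1] := eqVneq (b * a0) 1.
  right => x; have bi : b = a0^-1 by rewrite -(mulgK a0 b) ba1 mul1g.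
  by rewrite qE bi conjgE invgK -!mulgA mulVg mulg1.
left.
suff cb : forall g, commute g b by move=> x; rewrite qE conj_comm // cb.
move=> g.
have [n nN ng] := reg_trans g.
have nH : n \in Hol gT := subsetP NH n nN.
pose bt := beta n.
have btM : forall x y, bt (x * y) = bt x * bt y := beta_morph nH.
have [k Ek] : exists k, q0 ^ n = q0 ^+ k by apply/cycleP; apply: nQ.
have iterq : forall j y, (q0 ^+ j) y = y ^ (b ^+ j) * a0 ^+ j.
  move=> j y; rewrite permX; elim: j => [|j IH] /=; first by rewrite !expg0 conjg1 mulg1.
  rewrite IH qE conjMg -conjgM -(expgSr b j).
  rewrite (conj_comm _ _ (commP _ _ (groupX j a0P) bP)) -mulgA -(expgSr a0 j) //.
have Ez : forall z, n (q0 z) = (q0 ^+ k) (n z).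
  by move=> z; rewrite -Ek conjgE !permM permK.
have E2 : forall z, bt z ^ bt b * bt a0 * g = (bt z * g) ^ (b ^+ k) * a0 ^+ k.
  move=> z; have := Ez z.
  by rewrite qE iterq (hol_beta n (z ^ b * a0)) (hol_beta n z) ng -/bt btM (gfJ btM).
have E1 : bt a0 * g = g ^ (b ^+ k) * a0 ^+ k.
  by have := E2 1; rewrite (gf1 btM) conj1g !mul1g.
have bt_conj : forall w, w ^ bt b = w ^ (b ^+ k).
  move=> w; pose z := n^-1 (w * g).
  have bz : bt z = w by rewrite /bt /beta /z permKV ng mulgK.
  have := E2 z; rewrite bz conjMg -[RHS]mulgA -E1 -[LHS]mulgA.
  by move/mulIg.
pose c := bt b * (b ^+ k)^-1.
have cP : c \in P by rewrite groupM ?groupV ?groupX // holP.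
have cc : forall w, commute w c.
  by move=> w; apply: conj_fix_comm; rewrite /c conjgM bt_conj conjgK.
have [c1|c1] := eqVneq c 1; last first.
  have : b \in <[c]> by rewrite (cycP _ cP c1).
  by case/cycleP => i ->; apply: commuteX; apply: cc.
have btb : bt b = b ^+ k.
  by move: c1; rewrite /c => /eqP; rewrite -eq_mulgV1 => /eqP.
have [j Ej] : exists j, b * a0 = b ^+ j by apply/cycleP; rewrite (cycP _ bP b1) groupM.
pose d := (b * a0) ^+ k.
have dbt : bt (b * a0) = d by rewrite /d Ej (gfX btM) btb -!expgM mulnC.
have dP : d \in P by rewrite groupX // groupM.
have d1 : d != 1.
  apply: contra ba1 => /eqP d1'; rewrite -dbt in d1'.
  apply/eqP; apply: (beta_inj n); by rewrite -/bt d1' (gf1 btM).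
have gd : commute g d.
  have : bt (b * a0) * g = g * d.
    rewrite btM -mulgA E1 btb mulgA -conjgC -mulgA -expgMn //.
    exact: commP.
  by rewrite dbt => h; rewrite /commute h.
have : b \in <[d]> by rewrite (cycP _ dP d1).
by case/cycleP => i ->; apply: commuteX.
Qed.


Lemma final : [/\ group_set (nu_set N P) /\ nu_set N P \subset N,
      p.-Sylow(N) (nu_set N P),
      nu_set N P = (@rho gT) @: P \/ nu_set N P = (@lambda gT) @: P
    & [~: rhoG gT, nu_set N P] \subset nu_set N P].
Proof.
have [Q sQ] := Sylow_exists p N.
have E := nuQ Q sQ.
have QN := pHall_sub sQ.
have cQ : #|Q| = p by rewrite (card_Hall sQ) cardN -(card_Hall sylP) cardP.
have nQ : forall n, n \in N -> Q :^ n = Q.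
  move=> n nN; have sQn : p.-Sylow(N) (Q :^ n)%G by rewrite pHallJ.
  by have := nuQ _ sQn; rewrite E /= => <-.
have P1 : (P : {set gT}) != 1.
  apply/eqP => P1; have := cardP; rewrite P1 cards1 => p1.
  by move: (prime_gt1 pr); rewrite -p1.
have [a0 a0P a01] := trivgPn _ P1.
have [q0N q01] := nu_spec a0.
set q0 := nu N a0 in q0N q01.
have q0Q : q0 \in Q by rewrite -E imset_f.
have q0H : q0 \in Hol gT := subsetP NH q0 q0N.
have q0p : q0 ^+ p = 1 by rewrite -cQ expg_cardG.
have [b bP bE] := keyB q0 q0H q0p.
have qE : forall x, q0 x = x ^ b * a0 by move=> x; rewrite hol_beta bE q01.
have q0n1 : q0 != 1 by apply: contraNneq a01 => q0e; rewrite -q01 q0e perm1.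
have cQ0 : <[q0]> = Q.
  apply/eqP; rewrite eqEcard cycle_subG q0Q /= cQ -orderE.
  have : #[q0] %| p by rewrite order_dvdn q0p.
  case/primeP: pr => _ H /H /orP[/eqP o1|/eqP ->]; last by rewrite leqnn.
  by move: q0n1; rewrite -order_eq1 o1.
have nQ0 : forall n, n \in N -> q0 ^ n \in <[q0]>.
  by move=> n nN; rewrite cQ0 -(nQ n nN) memJ_conjg.
have H2 : nu_set N P = (@rho gT) @: P \/ nu_set N P = (@lambda gT) @: P.
  case: (core _ _ _ q0N a0P bP nQ0 qE) => [hr|hl]; [left|right];
    apply: eq_in_imset => x xP; have : x \in <[a0]> by rewrite (cycP _ a0P a01).
  - case/cycleP => k ->.
    have pk : q0 ^+ k = rho (a0 ^+ k).
      apply/permP => y; rewrite permX /rho permE.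
      by elim: k => [|k IH] /=; rewrite ?expg0 ?mulg1 // IH hr expgSr mulgA.
    by apply: nu_eq; [rewrite -pk groupX | rewrite /rho permE mul1g].
  - case/cycleP => k ->.
    have pk : q0 ^+ k = lambda (a0 ^+ k).
      apply/permP => y; rewrite permX /lambda permE.
      by elim: k => [|k IH] /=; rewrite ?expg0 ?mul1g // IH hl expgS mulgA.
    by apply: nu_eq; [rewrite -pk groupX | rewrite /lambda permE mulg1].
have H4 : forall z x, z \in nu_set N P -> x \in rhoG gT -> z ^ x \in nu_set N P.
  move=> z _ zn /imsetP[g _ ->].
  case: H2 => H2; move: zn; rewrite H2 => /imsetP[u uP ->].
  - have -> : rho u ^ rho g = rho (u ^ g).
      apply: (mulgI (rho g)); rewrite -conjgC; apply/permP => y.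
      by rewrite !permM /rho !permE conjgE !mulgA mulgK.
    by rewrite imset_f // memJP.
  - have -> : lambda u ^ rho g = lambda u.
      rewrite conjgE.
      have -> : lambda u * rho g = rho g * lambda u.
        by apply/permP => y; rewrite !permM /rho /lambda !permE mulgA.
      by rewrite mulKg.
    by rewrite imset_f.
split => //.
- by rewrite E; split; [exact: groupP | exact: QN].
- by rewrite E.
rewrite /commutator E gen_subG; apply/subsetP => _ /imset2P[x y xR yQ ->].
rewrite commgEr groupM // -E H4 // E groupV //.
Qed.

End Main.

Theorem mainTheorem18 (gT : finGroupType) (p m : nat) (P M : {group gT})
    (N : {group {perm gT}}) :
  prime p ->
  #|[set: gT]| = (m * p)%N ->
  ~~ (p %| m) ->
  'Syl_p([set: gT]) = [set P] ->
  #|M| = m ->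
  ~~ (p %| #|Aut M|) ->
  N \subset Hol gT ->
  regular N ->
  [/\ group_set (nu_set N P) /\ nu_set N P \subset N,
      p.-Sylow(N) (nu_set N P),
      nu_set N P = (@rho gT) @: P \/ nu_set N P = (@lambda gT) @: P
    & [~: rhoG gT, nu_set N P] \subset nu_set N P].
Proof.
move=> pr cardG pm SylP cardM autM NH reg.
exact: (@final gT p m P M N pr cardG pm SylP cardM autM NH reg).
Qed.
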